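(* Let $G=(V,E)$ be a finite undirected graph with $m=|E|\ge 1$ edges, and for each node $i\in V$ let $k_i$ denote its degree. Consider the random multigraph $G'$ produced by the configuration model from $G$ (see context). For nonnegative integers $a,b,c$ and positive integer $M$ define \[ A(a,b,M)=\sum_{t=1}^{\min\{a,b\}}(-1)^{t+1}\frac{\binom{a}{t}\binom{b}{t}\,t!}{\prod_{p=1}^{t}(2M+1-2p)}, \] \[ C(a,b,c,M)=\sum_{t=1}^{\min\{b,c-1\}}(-1)^{t+1}A(a,c-t,M-t)\,\frac{\binom{c}{t}\binom{b}{t}\,t!}{\prod_{p=1}^{t}(2M+1-2p)}, \] \[ T(a,b,c,M)=\sum_{t=1}^{\min\{a-1,b-1\}}(-1)^{t+1}C(a-t,b-t,c,M-t)\,\frac{\binom{a}{t}\binom{b}{t}\,t!}{\prod_{p=1}^{t}(2M+1-2p)}, \] with empty sums equal to $0$. Then for any three pairwise distinct nodes $i,j,r\in V$: (1) the probability that $i$ and $j$ are connected in $G'$ equals $A(k_i,k_j,m)$; (2) the probability that $i$ and $r$ are connected and $j$ and $r$ are connected in $G'$ equals $C(k_i,k_j,k_r,m)$; (3) the probability that $i$ and $r$ are connected, $j$ and $r$ are connected, and $i$ and $j$ are connected in $G'$ equals $T(k_i,k_j,k_r,m)$.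
   Context: Configuration model: given $G=(V,E)$ with $m$ edges and degrees $k_i$, each node $i$ is given $k_i$ ''stubs'' (half-edges), for a total of $2m$ stubs. A perfect matching of the $2m$ stubs is chosen uniformly at random among all $(2m)!/(2^m m!)=\prod_{p=1}^{m}(2m+1-2p)$ perfect matchings; each matched pair of stubs, one attached to node $u$ and one to node $v$, becomes an edge $\{u,v\}$ of the random multigraph $G'$ (multi-edges and self-loops allowed). Thus every node keeps its degree $k_i$. Two distinct nodes $u,v$ are said to be connected in $G'$ if at least one stub of $u$ is matched with at least one stub of $v$. *)

(* Defs.v *)
From mathcomp Require Import all_boot all_order all_algebra all_fingroup.
Set Implicit Arguments. Unset Strict Implicit. Unset Printing Implicit Defensive.
Import Order.TTheory GRing.Theory Num.Theory.
Local Open Scope ring_scope.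

Section Config.
Variables (V : finType) (e : rel V).

Definition deg (i : V) : nat := #|[set j | e i j]|.

Definition edges : {set {set V}} := [set [set x; y] | x in V, y in V & e x y].

Definition nedges : nat := #|edges|.

(* stubs: node i carries deg i stubs, (i, s) with s < deg i *)
Definition stub := {i : V & 'I_(deg i)}.

Definition owner (s : stub) : V := tag s.

(* perfect matchings of the stubs = fixed-point-free involutions *)
Definition matchings : {set {perm stub}} :=
  [set p : {perm stub} | [forall x, (p (p x) == x) && (p x != x)]].

Definition connected (p : {perm stub}) (u v : V) : bool :=
  [exists s : stub, (owner s == u) && (owner (p s) == v)].

Definition prob (P : pred {perm stub}) : rat :=
  (#|[set p in matchings | P p]|)%:R / (#|matchings|)%:R.

End Config.

Definition den (t : nat) (M : int) : rat :=
  \prod_(1 <= p < t.+1) ((2 * M + 1 - 2 * (p : int)) %:~R).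

Definition coefA (a b t : nat) : rat := ('C(a, t) * 'C(b, t) * t`!)%:R.

Definition Afun (a b : nat) (M : int) : rat :=
  \sum_(1 <= t < (minn a b).+1)
     (-1) ^+ t.+1 * coefA a b t / den t M.

Definition Cfun (a b c : nat) (M : int) : rat :=
  \sum_(1 <= t < (minn b (c - 1)).+1)
     (-1) ^+ t.+1 * Afun a (c - t) (M - (t : int)) * coefA c b t / den t M.

Definition Tfun (a b c : nat) (M : int) : rat :=
  \sum_(1 <= t < (minn (a - 1) (b - 1)).+1)
     (-1) ^+ t.+1 * Cfun (a - t) (b - t) c (M - (t : int)) * coefA a b t / den t M.

(* Main.v *)
Require Import Defs.
From mathcomp Require Import all_boot all_order all_algebra all_fingroup zify ring lra.
Set Implicit Arguments. Unset Strict Implicit. Unset Printing Implicit Defensive.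
Import Order.TTheory GRing.Theory Num.Theory.

Section Comb.
Variable X : finType.

Definition mset (U : {set X}) : {set {perm X}} :=
  [set p : {perm X} | [forall x, if x \in U then (p (p x) == x) && (p x != x) else p x == x]].
Definition conn (p : {perm X}) (S T : {set X}) : bool := [exists z in S, p z \in T].
Definition cnt U (F : pred {perm X}) : nat := #|[set p in mset U | F p]|.


Lemma mset_out p U x : p \in mset U -> x \notin U -> p x = x.
Proof.
move=> pU xU; move: pU; rewrite inE => /forallP /(_ x); by rewrite (negbTE xU) => /eqP.
Qed.

Lemma mset_in p U x : p \in mset U -> x \in U -> [/\ p x \in U, p (p x) = x & p x != x].
Proof.
move=> pU xU; have := pU; rewrite inE => /forallP /(_ x); rewrite xU.
case/andP=> /eqP H1 H2; split=> //; apply/negPn/negP => pxU.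
have := mset_out pU pxU; rewrite H1 => E.
by rewrite -E eqxx in H2.
Qed.


Lemma msetP (p : {perm X}) (U : {set X}) :
  (forall z, if z \in U then (p (p z) == z) && (p z != z) else p z == z) -> p \in mset U.
Proof. by move=> H; rewrite inE; apply/forallP. Qed.

Lemma cond_char (U : {set X}) (x y : X) (p : {perm X}) : x != y -> x \in U -> y \in U ->
  (p \in mset U) && (p x == y) = ((p * tperm x y)%g \in mset (U :\ x :\ y)).
Proof.
move=> xy xU yU; apply/idP/idP.
- case/andP=> pU /eqP pxy.
  have pyx : p y = x by rewrite -pxy; case: (mset_in pU xU).
  apply: msetP => z; rewrite !in_setD1 !permM.
  case: (eqVneq z y) => [->|zy] /=; first by rewrite pyx tpermL.
  case: (eqVneq z x) => [->|zx] /=; first by rewrite pxy tpermR.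
  case: ifP => zU.
    case: (mset_in pU zU) => pzU ppz pzz.
    have pzx : x != p z.
      apply/eqP => E; have /perm_inj Hz : p z = p y by rewrite -E pyx.
      by rewrite Hz eqxx in zy.
    have pzy : y != p z.
      apply/eqP => E; have /perm_inj Hz : p z = p x by rewrite -E pxy.
      by rewrite Hz eqxx in zx.
    rewrite (tpermD pzx pzy) ppz tpermD ?eqxx //=; by rewrite eq_sym.
  by rewrite (mset_out pU (negbT zU)) tpermD // eq_sym.
- move=> qU; set q := (p * tperm x y)%g in qU.
  have pq : forall z, p z = tperm x y (q z) by move=> z; rewrite /q permM tpermK.
  have xU' : x \notin U :\ x :\ y by rewrite !in_setD1 eqxx andbF.
  have yU' : y \notin U :\ x :\ y by rewrite !in_setD1 eqxx.
  have pxy : p x = y by rewrite pq (mset_out qU xU') tpermL.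
  have pyx : p y = x by rewrite pq (mset_out qU yU') tpermR.
  rewrite pxy eqxx andbT; apply: msetP => z.
  case: (eqVneq z x) => [->|zx]; first by rewrite xU pxy pyx eqxx eq_sym xy.
  case: (eqVneq z y) => [->|zy]; first by rewrite yU pyx pxy eqxx xy.
  case: ifP => zU.
    have zU' : z \in U :\ x :\ y by rewrite !in_setD1 zx zy.
    case: (mset_in qU zU') => qzU qqz qzz.
    have qzx : x != q z by apply/eqP => E; move: qzU; rewrite -E (negbTE xU').
    have qzy : y != q z by apply/eqP => E; move: qzU; rewrite -E (negbTE yU').
    rewrite !pq (tpermD qzx qzy) qqz tpermD ?eqxx ?(eq_sym x) ?(eq_sym y) //=.
  have zU' : z \notin U :\ x :\ y by rewrite !in_setD1 zU !andbF.
  by rewrite pq (mset_out qU zU') tpermD // eq_sym.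
Qed.


Lemma mem_cnt (U : {set X}) (F : pred {perm X}) p :
  (p \in [set p in mset U | F p]) = (p \in mset U) && F p.
Proof. by rewrite inE. Qed.

Lemma cnt_ext (U : {set X}) (F G : pred {perm X}) :
  (forall p, p \in mset U -> F p = G p) -> cnt U F = cnt U G.
Proof.
move=> H; rewrite /cnt; apply: eq_card => p; rewrite !mem_cnt.
by case pU: (p \in mset U) => //=; rewrite H.
Qed.

Lemma cnt_cond (U : {set X}) (x y : X) (F : pred {perm X}) : x != y -> x \in U -> y \in U ->
  cnt U (fun p => (p x == y) && F p) = cnt (U :\ x :\ y) (fun q => F (q * tperm x y)%g).
Proof.
move=> xy xU yU; rewrite /cnt.
have can : cancel (fun q : {perm X} => (q * tperm x y)%g) (fun q => (q * tperm x y)%g).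
  by move=> q; rewrite -mulgA tperm2 mulg1.
rewrite -(card_imset _ (mulIg (tperm x y))) (can_imset_pre _ can).
apply: eq_card => p; rewrite inE !mem_cnt andbA cond_char // (can p).
by [].
Qed.

Lemma conn_cond (q : {perm X}) (x y : X) (S T : {set X}) : x != y -> q x = x -> q y = y ->
  conn (q * tperm x y)%g S T =
  [|| conn q (S :\ x :\ y) (T :\ x :\ y), (x \in S) && (y \in T) | (y \in S) && (x \in T)].
Proof.
move=> xy qx qy.
have qzx : forall z, z != x -> q z != x.
  by move=> z zx; apply: contra zx => /eqP E; apply/eqP; apply: (@perm_inj _ q); rewrite E qx.
have qzy : forall z, z != y -> q z != y.
  by move=> z zy; apply: contra zy => /eqP E; apply/eqP; apply: (@perm_inj _ q); rewrite E qy.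
apply/idP/idP.
- case/existsP=> z /andP[zS]; rewrite permM; move: zS.
  case: (eqVneq z x) => [->|zx]; first by rewrite qx tpermL => -> ->; rewrite /= orbT.
  case: (eqVneq z y) => [->|zy]; first by rewrite qy tpermR => -> ->; rewrite /= !orbT.
  move=> zS; rewrite tpermD 1?eq_sym ?qzx ?qzy // => qzT.
  apply/orP; left; apply/existsP; exists z.
  by rewrite !in_setD1 zx zy zS qzT (qzx _ zx) (qzy _ zy).
- case/or3P.
  + case/existsP=> z /andP[]; rewrite !in_setD1 => /and3P[zy zx zS] /and3P[_ _ qzT].
    apply/existsP; exists z; rewrite zS permM tpermD // eq_sym ?qzx ?qzy //.
  + case/andP=> xS yT; apply/existsP; exists x; by rewrite xS permM qx tpermL.
  + case/andP=> yS xT; apply/existsP; exists y; by rewrite yS permM qy tpermR.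
Qed.


Lemma cnt_true (U : {set X}) : cnt U (fun _ => true) = #|mset U|.
Proof. by apply: eq_card => p; rewrite mem_cnt andbT. Qed.

Lemma cnt_split (U : {set X}) (F G : pred {perm X}) :
  cnt U F = cnt U (fun p => G p && F p) + cnt U (fun p => ~~ G p && F p).
Proof.
rewrite /cnt -(cardID [set p | G p] [set p in mset U | F p]).
congr (_ + _); apply: eq_card => p; rewrite !inE;
  by case: (G p); case: (F p); rewrite ?andbT ?andbF.
Qed.

Lemma cnt_val (U : {set X}) (x : X) (Q : {set X}) (F : pred {perm X}) :
  cnt U (fun p => (p x \in Q) && F p) = \sum_(y in Q) cnt U (fun p => (p x == y) && F p).
Proof.
rewrite /cnt -sum1_card (partition_big (fun p : {perm X} => p x) (mem Q)) /=; last first.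
  by move=> p; rewrite mem_cnt => /andP[_ /andP[]].
apply: eq_bigr => y yQ; rewrite -sum1_card; apply: eq_bigl => p.
rewrite !mem_cnt; case: (eqVneq (p x) y) => [->|]; first by rewrite yQ /= andbT.
by rewrite !andbF.
Qed.

Definition mmf n := (\prod_(1 <= p < n.+1) (2 * p - 1))%N.

Lemma mmfS n : mmf n.+1 = (mmf n * (2 * n + 1))%N.
Proof. rewrite /mmf big_nat_recr //=; congr (_ * _)%N; lia. Qed.

Lemma card_mset n (U : {set X}) : #|U| = n.*2 -> #|mset U| = mmf n.
Proof.
elim: n U => [|n IH] U.
  move=> /cards0_eq ->.
  have -> : mset set0 = [set 1%g].
    apply/setP => p; rewrite inE in_set1; apply/forallP/eqP.
      by move=> H; apply/permP => z; have := H z; rewrite inE perm1 => /eqP.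
    by move=> -> z; rewrite inE perm1.
  by rewrite cards1 /mmf big_geq.
move=> cU.
have : (0 < #|U|)%N by rewrite cU; lia.
case/card_gt0P => x xU.
rewrite -cnt_true (@cnt_ext _ _ (fun p => (p x \in U :\ x) && true)); last first.
  by move=> p pU; case: (mset_in pU xU) => H1 _ H2; rewrite in_setD1 H1 H2.
rewrite cnt_val.
rewrite (eq_bigr (fun _ => mmf n)); last first.
  move=> y; rewrite in_setD1 => /andP[yx yU].
  rewrite cnt_cond // 1?eq_sym // cnt_true; apply: IH.
  have := cardsD1 x U; have := cardsD1 y (U :\ x); rewrite xU in_setD1 yx yU /=. lia.
rewrite sum_nat_const mmfS.
have := cardsD1 x U; rewrite xU. lia.
Qed.

End Comb.

Local Open Scope ring_scope.

Definition Sg (h : nat -> rat) (a b : nat) (M : int) (K : nat) : rat :=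
  \sum_(1 <= t < K.+1) (-1) ^+ t.+1 * h t * coefA a b t / den t M.

Lemma den_neq0 t M : den t M != 0.
Proof.
rewrite /den prodf_seq_neq0; apply/allP => p _ /=.
rewrite intr_eq0; apply/eqP; lia.
Qed.

Lemma den0 M : den 0 M = 1.
Proof. by rewrite /den big_geq. Qed.

Lemma denS t M : den t.+1 M = (2 * M - 1)%:~R * den t (M - 1).
Proof.
rewrite /den big_nat_recl //; congr (_ * _).
  by congr (_ %:~R); lia.
by apply: eq_bigr => p _; congr (_ %:~R); lia.
Qed.

Lemma SgE h a b M K :
  Sg h a b M K = \sum_(0 <= s < K) (-1) ^+ s * h s.+1 * coefA a b s.+1 / den s.+1 M.
Proof.
rewrite /Sg big_add1 /=; apply: eq_bigr => s _.
by rewrite !exprS !mulN1r opprK.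
Qed.

Lemma coefA_rec a b s :
  coefA a.+1 b s.+1 = coefA a b s.+1 + b%:R * coefA a b.-1 s.
Proof.
rewrite /coefA -natrM -natrD; congr (_ %:R).
rewrite binS mulnDl mulnDl; congr (_ + _).
have H := mul_bin_diag b s.
rewrite factS.
transitivity ('C(a, s) * (s.+1 * 'C(b, s.+1)) * s`!)%N; first by ring.
rewrite -H; ring.
Qed.

Lemma coefA0 a b : coefA a b 0 = 1.
Proof. by rewrite /coefA !bin0. Qed.

Lemma Sg_rec h a b M K :
  Sg h a.+1 b M K.+1 = Sg h a b M K.+1 +
     b%:R / (2 * M - 1)%:~R * (h 1%N - Sg (fun s => h s.+1) a b.-1 (M - 1) K).
Proof.
have dn : (2 * M - 1)%:~R != 0 :> rat by rewrite intr_eq0; apply/eqP; lia.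
have E : forall s, (-1) ^+ s * h s.+1 * coefA a.+1 b s.+1 / den s.+1 M =
   (-1) ^+ s * h s.+1 * coefA a b s.+1 / den s.+1 M +
   b%:R / (2 * M - 1)%:~R * ((-1) ^+ s * h s.+1 * coefA a b.-1 s / den s (M - 1)).
  move=> s; rewrite coefA_rec denS.
  have := den_neq0 s (M - 1); move: (den s (M - 1)) => D DN.
  field. by rewrite DN; move: dn; rewrite rmorphB rmorphM /=.
rewrite !SgE.
under eq_bigr => s _ do rewrite E.
rewrite big_split /= -mulr_sumr; congr (_ + _ * _).
rewrite big_nat_recl // expr0 !mul1r coefA0 den0 divr1 mulr1.
rewrite -sumrN; congr (_ + _); apply: eq_bigr => s _.
by rewrite exprS !mulN1r !mulNr.
Qed.

Lemma Sg_widen h a b M K K' : (K <= K')%N ->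
  (forall t, (K < t)%N -> (t <= K')%N -> h t = 0 \/ coefA a b t = 0) ->
  Sg h a b M K = Sg h a b M K'.
Proof.
move=> KK H; rewrite /Sg [RHS](big_cat_nat (n := K.+1)) //=; [idtac|lia..].
rewrite [X in _ + X]big_nat_cond [X in _ + X]big1 ?addr0 // => t /andP[/andP[H1 H2] _].
by case: (H t H1 (H2 : (t <= K')%N)) => ->; rewrite ?mulr0 ?mul0r.
Qed.

Lemma coefA_small a b t : (a < t)%N || (b < t)%N -> coefA a b t = 0.
Proof.
by case/orP => H; rewrite /coefA ?(bin_small H) ?muln0 ?mul0n.
Qed.

Lemma coefAC a b t : coefA a b t = coefA b a t.
Proof. by rewrite /coefA [('C(a, t) * _)%N]mulnC. Qed.

Definition SS h a b M := Sg h a b M a.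

Lemma SS0 h b M : SS h 0 b M = 0.
Proof. by rewrite /SS /Sg big_geq. Qed.

Lemma SS_rec h a b M :
  SS h a.+1 b M = SS h a b M +
     b%:R / (2 * M - 1)%:~R * (h 1%N - SS (fun s => h s.+1) a b.-1 (M - 1)).
Proof.
rewrite /SS Sg_rec; congr (_ + _).
apply/esym/Sg_widen => // t H1 H2; right; apply: coefA_small; lia.
Qed.

Lemma Afun_SS a b M : Afun a b M = SS (fun _ => 1) a b M.
Proof.
rewrite /SS -(@Sg_widen _ _ _ _ (minn a b)); last 2 first.
- lia.
- move=> t H1 H2; right; apply: coefA_small; lia.
by rewrite /Afun /Sg; apply: eq_bigr => t _; rewrite mulr1.
Qed.

Lemma Afun0 a M : Afun a 0 M = 0.
Proof. by rewrite /Afun minn0 big_geq. Qed.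
Lemma Afun0l a M : Afun 0 a M = 0.
Proof. by rewrite /Afun min0n big_geq. Qed.

Lemma Cfun_SS a b c M : Cfun a b c M = SS (fun t => Afun a (c - t) (M - t%:Z)) b c M.
Proof.
rewrite /SS -(@Sg_widen _ _ _ _ (minn b (c - 1))); last 2 first.
- lia.
- move=> t H1 H2.
  case: (ltnP c t) => Hc; first by right; apply: coefA_small; rewrite Hc orbT.
  left; have -> : (c - t = 0)%N by lia.
  exact: Afun0.
by rewrite /Cfun /Sg; apply: eq_bigr => t _; rewrite coefAC.
Qed.

Lemma Cfun0 b c M : Cfun 0 b c M = 0.
Proof. by rewrite /Cfun big1 // => t _; rewrite Afun0l mulr0 !mul0r. Qed.
Lemma Cfun0b a c M : Cfun a 0 c M = 0.
Proof. by rewrite /Cfun min0n big_geq. Qed.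

Lemma Tfun_SS a b c M :
  Tfun a b c M = SS (fun t => Cfun (a - t) (b - t) c (M - t%:Z)) a b M.
Proof.
rewrite /SS -(@Sg_widen _ _ _ _ (minn (a - 1) (b - 1))); last 2 first.
- lia.
- move=> t H1 H2.
  case: (ltnP b t) => Hb; first by right; apply: coefA_small; rewrite Hb orbT.
  left; case: (ltnP t b) => Htb.
    have -> : (a - t = 0)%N by lia.
    exact: Cfun0.
  have -> : (b - t = 0)%N by lia.
  exact: Cfun0b.
by [].
Qed.

Lemma SS_ext h h' a b M : (forall t, h t = h' t) -> SS h a b M = SS h' a b M.
Proof. by move=> H; rewrite /SS /Sg; apply: eq_bigr => t _; rewrite H. Qed.

Lemma step_gen h a b n :
  (mmf n.+1)%:R * SS h a.+1 b n.+1 = (mmf n.+1)%:R * SS h a b n.+1 +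
    b%:R * ((mmf n)%:R * (h 1%N - SS (fun s => h s.+1) a b.-1 n)) :> rat.
Proof.
rewrite SS_rec.
have -> : (Posz n.+1 - 1 = Posz n)%R by lia.
rewrite mmfS natrM.
have -> : ((2 * n + 1)%N%:R = (2 * Posz n.+1 - 1)%:~R :> rat).
  have -> : (2 * Posz n.+1 - 1 = Posz (2 * n + 1))%R by lia.
  by [].
have : (2 * Posz n.+1 - 1)%:~R != 0 :> rat by rewrite intr_eq0; apply/eqP; lia.
move: ((2 * Posz n.+1 - 1)%:~R) => d dn.
field. done.
Qed.

Section Main.
Variable X : finType.

Lemma setD1_id (A : {set X}) x : x \notin A -> A :\ x = A.
Proof.
move=> xA; apply/setP => z; rewrite in_setD1; case: eqP => // ->.
by rewrite (negbTE xA).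
Qed.

Lemma conn_sub (p : {perm X}) (S S' T : {set X}) : S \subset S' -> conn p S T -> conn p S' T.
Proof.
move=> /subsetP sS /existsP[z /andP[zS pz]]; apply/existsP; exists z.
by rewrite sS.
Qed.

Lemma conn_D1 (p : {perm X}) (S T : {set X}) x : x \in S -> conn p S T = conn p (S :\ x) T || (p x \in T).
Proof.
move=> xS; apply/idP/idP.
  case/existsP=> z /andP[zS pz]; case: (eqVneq z x) => [E|zx].
    by rewrite -E pz orbT.
  by apply/orP; left; apply/existsP; exists z; rewrite in_setD1 zx zS.
case/orP; first by apply: conn_sub; exact: subD1set.
by move=> px; apply/existsP; exists x; rewrite xS.
Qed.

Lemma conn0 (p : {perm X}) (T : {set X}) : conn p set0 T = false.
Proof. by apply/existsP => -[z]; rewrite inE. Qed.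

Lemma cnt_false (U : {set X}) : cnt U (fun _ => false) = 0%N.
Proof. by apply: eq_card0 => p; rewrite mem_cnt andbF. Qed.

Lemma cnt_not (U : {set X}) (F G : pred {perm X}) :
  (cnt U (fun p => ~~ G p && F p))%:R = (cnt U F)%:R - (cnt U (fun p => G p && F p))%:R :> rat.
Proof. rewrite [in RHS](cnt_split U F G) natrD; ring. Qed.

Lemma mset_fix (U : {set X}) x y (q : {perm X}) : q \in mset (U :\ x :\ y) -> q x = x /\ q y = y.
Proof.
move=> qU; split; apply: (mset_out qU); rewrite !in_setD1 eqxx ?andbF //.
Qed.


Lemma sub_D1D1 (A U : {set X}) x y : A \subset U -> x \notin A -> y \notin A -> A \subset U :\ x :\ y.
Proof.
move=> sAU xA yA; apply/subsetP => z zA; rewrite !in_setD1 (subsetP sAU) // andbT.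
by apply/andP; split; [apply: contraNneq yA => <- | apply: contraNneq xA => <-].
Qed.

Lemma sub_D1D1' (A U : {set X}) x y : A \subset U -> x \notin A -> A :\ y \subset U :\ x :\ y.
Proof.
move=> sAU xA; apply/subsetP => z; rewrite !in_setD1 => /andP[-> zA].
by rewrite (subsetP sAU) // andbT; apply: contraNneq xA => <-.
Qed.

Lemma card_D1D1 (U : {set X}) x y n : x != y -> x \in U -> y \in U -> #|U| = n.+1.*2 ->
  #|U :\ x :\ y| = n.*2.
Proof.
move=> xy xU yU cU.
have := cardsD1 x U; have := cardsD1 y (U :\ x); rewrite xU in_setD1 eq_sym xy yU /=. lia.
Qed.

Lemma card_D1 (A : {set X}) y : y \in A -> #|A :\ y| = #|A|.-1.
Proof. by move=> yA; have := cardsD1 y A; rewrite yA => ->. Qed.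

Lemma natS1 r s : (r - s.+1 = r.-1 - s)%N.
Proof. lia. Qed.
Lemma intS1 (n s : nat) : (Posz n.+1 - Posz s.+1 = Posz n - Posz s)%R.
Proof. lia. Qed.
Lemma intS0 (n : nat) : (Posz n.+1 - 1 = Posz n)%R.
Proof. lia. Qed.

Lemma thA a : forall (U P Q : {set X}) n, #|P| = a -> P \subset U -> Q \subset U ->
  [disjoint P & Q] -> #|U| = n.*2 ->
  (cnt U (fun p => conn p P Q))%:R = (mmf n)%:R * SS (fun _ => 1) a #|Q| n :> rat.
Proof.
elim: a => [|a IH] U P Q n cP sPU sQU dPQ cU.
  move/cards0_eq: cP => ->; rewrite SS0 mulr0.
  by rewrite (@cnt_ext _ _ (fun p => conn p set0 Q) (fun _ => false)) ?cnt_false // => p _; rewrite conn0.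
have : (0 < #|P|)%N by rewrite cP.
case/card_gt0P => x xP.
have xU : x \in U by apply: (subsetP sPU).
have xQ : x \notin Q by rewrite (disjointFr dPQ xP).
case: n cU => [|n] cU.
  by move/cards0_eq: cU => U0; rewrite U0 inE in xU.
set P' := P :\ x.
have cP' : #|P'| = a by rewrite /P' card_D1 // cP.
have sP' : P' \subset P by exact: subD1set.
rewrite (cnt_split U _ (fun p => conn p P' Q)).
rewrite (@cnt_ext _ _ (fun p => conn p P' Q && conn p P Q) (fun p => conn p P' Q)); last first.
  by move=> p _; case H: (conn p P' Q) => //=; apply: conn_sub H.
rewrite (@cnt_ext _ _ (fun p => ~~ conn p P' Q && conn p P Q)
   (fun p => (p x \in Q) && ~~ conn p P' Q)); last first.
  by move=> p _; rewrite (conn_D1 _ _ xP); case: (conn p P' Q); case: (p x \in Q).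
rewrite cnt_val natrD natr_sum.
rewrite (IH U P' Q n.+1) //; last first.
- exact: disjointWl dPQ.
- exact: subset_trans sPU.
rewrite (eq_bigr (fun _ => (mmf n)%:R * (1 - SS (fun _ => 1) a #|Q|.-1 n))); last first.
  move=> y yQ.
  have yU : y \in U by apply: (subsetP sQU).
  have xy : x != y by apply: contraNneq xQ => ->.
  have yP : y \notin P by rewrite (disjointFr (A := Q) _ yQ) // disjoint_sym.
  have xP' : x \notin P' by rewrite in_setD1 eqxx.
  have yP' : y \notin P' by rewrite in_setD1 (negbTE yP) andbF.
  have cU' := card_D1D1 xy xU yU cU.
  rewrite cnt_cond //.
  rewrite (@cnt_ext _ _ _ (fun q => ~~ conn q P' (Q :\ y) && true)); last first.
    move=> q qU; case: (mset_fix qU) => qx qy.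
    rewrite (conn_cond _ _ xy qx qy) andbT.
    rewrite (negbTE xP') (negbTE yP') /= !orbF.
    by rewrite (setD1_id xP') (setD1_id yP') [Q :\ x]setD1_id.
  rewrite (cnt_not _ (fun _ => true) (fun q => conn q P' (Q :\ y))) cnt_true (card_mset cU').
  rewrite (@cnt_ext _ _ (fun q => conn q P' (Q :\ y) && true) (fun q => conn q P' (Q :\ y))); last first.
    by move=> q _; rewrite andbT.
  rewrite (IH _ P' (Q :\ y) n) //; last first.
  - apply: (disjointWl sP'); apply: (disjointWr _ dPQ); exact: subD1set.
  - by apply/subsetP => z; rewrite !in_setD1 => /andP[-> zQ]; rewrite (subsetP sQU) // andbT; apply: contraNneq xQ => <-.
  - apply/subsetP => z zP'; rewrite !in_setD1 (subsetP sPU) ?(subsetP sP') // andbT.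
    by apply/andP; split; [apply: contraNneq yP' => <- | apply: contraNneq xP' => <-].
  have := cardsD1 y Q; rewrite yQ => ->; rewrite /= mulrBr mulr1.
  by [].
rewrite sumr_const -mulr_natl ?mulr1 step_gen /=; ring.
Qed.


Lemma thC b : forall (U I J R : {set X}) n, #|J| = b -> I \subset U -> J \subset U -> R \subset U ->
  [disjoint I & J] -> [disjoint I & R] -> [disjoint J & R] -> #|U| = n.*2 ->
  (cnt U (fun p => conn p I R && conn p J R))%:R =
    (mmf n)%:R * SS (fun t => Afun #|I| (#|R| - t) (n%:Z - t%:Z)) b #|R| n :> rat.
Proof.
elim: b => [|b IH] U I J R n cJ sIU sJU sRU dIJ dIR dJR cU.
  move/cards0_eq: cJ => ->; rewrite SS0 mulr0.
  rewrite (@cnt_ext _ _ _ (fun _ => false)) ?cnt_false // => p _.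
  by rewrite conn0 andbF.
have : (0 < #|J|)%N by rewrite cJ.
case/card_gt0P => x xJ.
have xU : x \in U by apply: (subsetP sJU).
have xR : x \notin R by rewrite (disjointFr dJR xJ).
have xI : x \notin I by rewrite (disjointFr (A := J) _ xJ) // disjoint_sym.
case: n cU => [|n] cU.
  by move/cards0_eq: cU => U0; rewrite U0 inE in xU.
set J' := J :\ x.
have cJ' : #|J'| = b by rewrite /J' card_D1 // cJ.
have sJ' : J' \subset J by exact: subD1set.
have xJ' : x \notin J' by rewrite in_setD1 eqxx.
rewrite (cnt_split U _ (fun p => conn p J' R)).
rewrite (@cnt_ext _ _ (fun p => conn p J' R && (conn p I R && conn p J R))
   (fun p => conn p I R && conn p J' R)); last first.
  move=> p _; case H: (conn p J' R); rewrite ?andbF //=.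
  by rewrite (conn_sub sJ' H) andbT.
rewrite (@cnt_ext _ _ (fun p => ~~ conn p J' R && (conn p I R && conn p J R))
   (fun p => (p x \in R) && (~~ conn p J' R && conn p I R))); last first.
  move=> p _; rewrite (conn_D1 _ _ xJ).
  by case: (conn p J' R); case: (p x \in R); case: (conn p I R).
rewrite cnt_val natrD natr_sum.
have dIJ' : [disjoint I & J'].
  by rewrite disjoint_sym; apply: (disjointWl sJ'); rewrite disjoint_sym.
rewrite (IH U I J' R n.+1 cJ' sIU (subset_trans sJ' sJU) sRU dIJ' dIR (disjointWl sJ' dJR) cU).
rewrite (eq_bigr (fun _ => (mmf n)%:R * (Afun #|I| #|R|.-1 n -
     SS (fun t => Afun #|I| (#|R|.-1 - t) (n%:Z - t%:Z)) b #|R|.-1 n))); last first.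
  move=> y yR.
  have yU : y \in U by apply: (subsetP sRU).
  have xy : x != y by apply: contraNneq xR => ->.
  have yJ : y \notin J by rewrite (disjointFr (A := R) _ yR) // disjoint_sym.
  have yI : y \notin I by rewrite (disjointFr (A := R) _ yR) // disjoint_sym.
  have yJ' : y \notin J' by rewrite in_setD1 (negbTE yJ) andbF.
  have cU' := card_D1D1 xy xU yU cU.
  rewrite cnt_cond //.
  rewrite (@cnt_ext _ _ _ (fun q => ~~ conn q J' (R :\ y) && conn q I (R :\ y))); last first.
    move=> q qU; case: (mset_fix qU) => qx qy.
    rewrite !(conn_cond _ _ xy qx qy).
    rewrite (negbTE xJ') (negbTE yJ') (negbTE xI) (negbTE yI) /= !orbF.
    by rewrite (setD1_id xJ') (setD1_id yJ') (setD1_id xI) (setD1_id yI) [R :\ x]setD1_id.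
  rewrite cnt_not.
  have dIR' : [disjoint I & R :\ y] by apply: (disjointWr _ dIR); exact: subD1set.
  have sIU' := sub_D1D1 sIU xI yI.
  have sRU' := sub_D1D1' y sRU xR.
  rewrite (@thA #|I| _ I (R :\ y) n erefl sIU' sRU' dIR' cU').
  rewrite -Afun_SS (card_D1 yR).
  rewrite (@cnt_ext _ _ (fun p => conn p J' (R :\ y) && conn p I (R :\ y))
     (fun p => conn p I (R :\ y) && conn p J' (R :\ y))); last by move=> p _; rewrite andbC.
  have dJR' : [disjoint J' & R :\ y].
    by apply: (disjointWl sJ'); apply: (disjointWr _ dJR); exact: subD1set.
  rewrite (IH _ I J' (R :\ y) n cJ' sIU' (sub_D1D1 (subset_trans sJ' sJU) xJ' yJ') sRU' dIJ' dIR' dJR' cU').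
  by rewrite (card_D1 yR) mulrBr.
rewrite sumr_const -mulr_natl !mulr1 step_gen /=.
rewrite subn1 intS0.
rewrite (@SS_ext (fun s => Afun #|I| (#|R| - s.+1) (Posz n.+1 - Posz s.+1))
   (fun t => Afun #|I| (#|R|.-1 - t) (n%:Z - t%:Z))); last first.
  by move=> t; rewrite natS1 intS1.
ring.
Qed.


Lemma thG a1 : forall (U I1 I J R : {set X}) n, #|I1| = a1 -> I1 \subset I ->
  I \subset U -> J \subset U -> R \subset U ->
  [disjoint I & J] -> [disjoint I & R] -> [disjoint J & R] -> #|U| = n.*2 ->
  (cnt U (fun p => conn p I1 J && (conn p I R && conn p J R)))%:R =
    (mmf n)%:R * SS (fun t => Cfun (#|I| - t) (#|J| - t) #|R| (n%:Z - t%:Z)) a1 #|J| n :> rat.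
Proof.
elim: a1 => [|a1 IH] U I1 I J R n cI1 sI1 sIU sJU sRU dIJ dIR dJR cU.
  move/cards0_eq: cI1 => ->; rewrite SS0 mulr0.
  rewrite (@cnt_ext _ _ _ (fun _ => false)) ?cnt_false // => p _.
  by rewrite conn0.
have : (0 < #|I1|)%N by rewrite cI1.
case/card_gt0P => x xI1.
have xI : x \in I by apply: (subsetP sI1).
have xU : x \in U by apply: (subsetP sIU).
have xR : x \notin R by rewrite (disjointFr dIR xI).
have xJ : x \notin J by rewrite (disjointFr dIJ xI).
case: n cU => [|n] cU.
  by move/cards0_eq: cU => U0; rewrite U0 inE in xU.
set I1' := I1 :\ x.
set I' := I :\ x.
have cI1' : #|I1'| = a1 by rewrite /I1' card_D1 // cI1.
have sI1' : I1' \subset I1 by exact: subD1set.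
have xI1' : x \notin I1' by rewrite in_setD1 eqxx.
have xI' : x \notin I' by rewrite in_setD1 eqxx.
rewrite (cnt_split U _ (fun p => conn p I1' J)).
rewrite (@cnt_ext _ _ (fun p => conn p I1' J && (conn p I1 J && (conn p I R && conn p J R)))
   (fun p => conn p I1' J && (conn p I R && conn p J R))); last first.
  by move=> p _; case H: (conn p I1' J); rewrite //= (conn_sub sI1' H).
rewrite (@cnt_ext _ _ (fun p => ~~ conn p I1' J && (conn p I1 J && (conn p I R && conn p J R)))
   (fun p => (p x \in J) && (~~ conn p I1' J && (conn p I R && conn p J R)))); last first.
  move=> p _; rewrite (conn_D1 _ _ xI1).
  by case: (conn p I1' J); case: (p x \in J); case: (conn p I R && conn p J R).
rewrite cnt_val natrD natr_sum.
rewrite (IH U I1' I J R n.+1 cI1' (subset_trans sI1' sI1) sIU sJU sRU dIJ dIR dJR cU).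
rewrite (eq_bigr (fun _ => (mmf n)%:R * (Cfun #|I|.-1 #|J|.-1 #|R| n -
     SS (fun t => Cfun (#|I|.-1 - t) (#|J|.-1 - t) #|R| (n%:Z - t%:Z)) a1 #|J|.-1 n))); last first.
  move=> y yJ.
  have yU : y \in U by apply: (subsetP sJU).
  have xy : x != y by apply: contraNneq xJ => ->.
  have yR : y \notin R by rewrite (disjointFr dJR yJ).
  have yI : y \notin I by rewrite (disjointFr (A := J) _ yJ) // disjoint_sym.
  have yI' : y \notin I' by rewrite in_setD1 (negbTE yI) andbF.
  have yI1 : y \notin I1 by apply: contra yI; apply: (subsetP sI1).
  have yI1' : y \notin I1' by rewrite in_setD1 (negbTE yI1) andbF.
  have cU' := card_D1D1 xy xU yU cU.
  rewrite cnt_cond //.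
  rewrite (@cnt_ext _ _ _ (fun q => ~~ conn q I1' (J :\ y) &&
        (conn q I' R && conn q (J :\ y) R))); last first.
    move=> q qU; case: (mset_fix qU) => qx qy.
    rewrite !(conn_cond _ _ xy qx qy).
    rewrite (negbTE xI1') (negbTE yI1') (negbTE yR) (negbTE xR) (negbTE yI) (negbTE xJ) /= !andbF !orbF.
    by rewrite (setD1_id xI1') (setD1_id yI1') (setD1_id xJ) (setD1_id xR) (setD1_id yR) (setD1_id yI').
  rewrite cnt_not.
  have sI'U : I' \subset U by apply: subset_trans sIU; exact: subD1set.
  have sI'U' := sub_D1D1 sI'U xI' yI'.
  have sJU' := sub_D1D1' y sJU xJ.
  have sRU' := sub_D1D1 sRU xR yR.
  have dI'J' : [disjoint I' & J :\ y].
    by apply: (disjointWl (subD1set _ _)); apply: (disjointWr (subD1set _ _) dIJ).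
  have dI'R : [disjoint I' & R] by apply: (disjointWl (subD1set _ _) dIR).
  have dJ'R : [disjoint J :\ y & R] by apply: (disjointWl (subD1set _ _) dJR).
  rewrite (@thC #|J :\ y| _ I' (J :\ y) R n erefl sI'U' sJU' sRU' dI'J' dI'R dJ'R cU').
  rewrite -Cfun_SS.
  have sI1I' : I1' \subset I'.
    by apply/subsetP => z; rewrite !in_setD1 => /andP[-> /(subsetP sI1) ->].
  rewrite (IH _ I1' I' (J :\ y) R n cI1' sI1I' sI'U' sJU' sRU' dI'J' dI'R dJ'R cU').
  by rewrite /I' !card_D1 // mulrBr.
rewrite sumr_const -mulr_natl !mulr1 step_gen /=.
rewrite !subn1 intS0.
rewrite (@SS_ext (fun s => Cfun (#|I| - s.+1) (#|J| - s.+1) #|R| (Posz n.+1 - Posz s.+1))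
   (fun t => Cfun (#|I|.-1 - t) (#|J|.-1 - t) #|R| (n%:Z - t%:Z))); last first.
  by move=> t; rewrite !natS1 intS1.
ring.
Qed.

End Main.

Section Final.
Variables (V : finType) (e : rel V).
Hypotheses (esym : symmetric e) (eirr : irreflexive e).

Definition Sof (u : V) : {set stub e} := [set s | owner s == u].

Lemma connectedE (p : {perm stub e}) u v : connected p u v = conn p (Sof u) (Sof v).
Proof. by apply: eq_existsb => s; rewrite !inE. Qed.

Lemma card_Sof u : #|Sof u| = deg e u.
Proof.
have inj : injective (fun k : 'I_(deg e u) => Tagged (fun i => 'I_(deg e i)) k).
  move=> k1 k2 H.
  have := congr1 (tagged_as (Tagged (fun i => 'I_(deg e i)) k1)) H.
  by rewrite !tagged_asE.
rewrite -[RHS]card_ord -(card_imset _ inj); apply: eq_card => s.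
rewrite inE; apply/eqP/imsetP.
  case: s => i k /= E; subst i; exists k => //.
by case=> k _ ->.
Qed.

Lemma disj_Sof u v : u != v -> [disjoint Sof u & Sof v].
Proof.
move=> uv; rewrite disjoint_subset; apply/subsetP => s; rewrite !inE => /eqP ->.
exact: uv.
Qed.

Lemma matchingsE : matchings e = mset [set: stub e].
Proof.
apply/setP => p; rewrite /matchings /mset !inE; apply: eq_forallb => x.
by rewrite inE.
Qed.

Lemma sum_deg : (\sum_u deg e u)%N = (nedges e).*2.
Proof.
have E1 : (\sum_u deg e u = \sum_(d : V * V | e d.1 d.2) 1)%N.
  rewrite -(pair_big_dep xpredT (fun u j => e u j) (fun _ _ => 1%N)) /=.
  apply: eq_bigr => u _; rewrite /deg -sum1_card.
  by apply: eq_bigl => j; rewrite inE.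
rewrite E1 (partition_big (fun d : V * V => [set d.1; d.2]) (mem (edges e))) /=; last first.
  move=> [x y] /= exy; apply/imset2P; exists x y => //; by rewrite inE.
rewrite (eq_bigr (fun _ => 2%N)); last first.
  move=> E /imset2P[x y _]; rewrite inE => /andP[_ exy] ->.
  have xy : x != y by apply: contraTneq exy => ->; rewrite eirr.
  have -> : 2%N = ((x, y) != (y, x)).+1 by rewrite xpair_eqE (negbTE xy).
  rewrite -cards2 -sum1_card; apply: eq_bigl => -[a b] /=.
  rewrite !inE /=.
  apply/idP/idP.
    case/andP=> eab /eqP Eab.
    have ab : a != b by apply: contraTneq eab => ->; rewrite eirr.
    have : a \in [set x; y] by rewrite -Eab !inE eqxx.
    have : b \in [set x; y] by rewrite -Eab !inE eqxx orbT.
    rewrite !inE => /orP[]/eqP Hb /orP[]/eqP Ha; subst a b; rewrite ?eqxx ?orbT //;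
      by rewrite eqxx in ab.
  case/orP => /eqP [-> ->].
    by rewrite exy eqxx.
  by rewrite esym exy /= setUC eqxx.
by rewrite sum_nat_const -muln2 mulnC.
Qed.

End Final.

Lemma mmf_gt0 n : (0 < mmf n)%N.
Proof. by elim: n => [|n IH]; rewrite ?mmfS ?muln_gt0 ?IH ?addn1 // /mmf big_geq. Qed.

Unset Implicit Arguments.

Theorem proposition1 (V : finType) (e : rel V)
  (esym : symmetric e) (eirr : irreflexive e)
  (hm : (1 <= nedges e)%N) (i j r : V)
  (hij : i != j) (hir : i != r) (hjr : j != r) :
  [/\ prob (fun p : {perm stub e} => connected p i j) = Afun (deg e i) (deg e j) (nedges e),
      prob (fun p : {perm stub e} => connected p i r && connected p j r)
        = Cfun (deg e i) (deg e j) (deg e r) (nedges e)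
    & prob (fun p : {perm stub e} => [&& connected p i r, connected p j r & connected p i j])
        = Tfun (deg e i) (deg e j) (deg e r) (nedges e)].
Proof.
have cT : #|[set: stub e]| = (nedges e).*2.
  rewrite cardsT -sum1_card (partition_big (fun s : stub e => owner s) xpredT) //=.
  rewrite -(sum_deg esym eirr); apply: eq_bigr => u _.
  by rewrite -(card_Sof e u) -sum1_card; apply: eq_bigl => s; rewrite inE.
have mpos : (mmf (nedges e))%:R != 0 :> rat by rewrite pnatr_eq0 -lt0n mmf_gt0.
have probE : forall P, prob P = (cnt [set: stub e] P)%:R / (mmf (nedges e))%:R.
  by move=> P; rewrite /prob matchingsE (card_mset cT).
have dij := disj_Sof e hij; have dir := disj_Sof e hir; have djr := disj_Sof e hjr.
have sT : forall u, Sof e u \subset [set: stub e] by move=> u; exact: subsetT.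
split.
- rewrite probE (@cnt_ext _ _ _ (fun p => conn p (Sof e i) (Sof e j))); last first.
    by move=> p _; rewrite connectedE.
  rewrite (@thA _ #|Sof e i| _ _ _ (nedges e) erefl (sT _) (sT _) dij cT).
  by rewrite -Afun_SS !card_Sof mulrC mulKf.
- rewrite probE (@cnt_ext _ _ _ (fun p => conn p (Sof e i) (Sof e r) && conn p (Sof e j) (Sof e r))); last first.
    by move=> p _; rewrite !connectedE.
  rewrite (@thC _ #|Sof e j| _ _ _ _ (nedges e) erefl (sT _) (sT _) (sT _) dij dir djr cT).
  by rewrite -Cfun_SS !card_Sof mulrC mulKf.
- rewrite probE (@cnt_ext _ _ _ (fun p => conn p (Sof e i) (Sof e j) &&
      (conn p (Sof e i) (Sof e r) && conn p (Sof e j) (Sof e r)))); last first.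
    move=> p _; rewrite !connectedE.
    by case: (conn p (Sof e i) (Sof e j)); rewrite ?andbT ?andbF.
  rewrite (@thG _ #|Sof e i| _ _ _ _ _ (nedges e) erefl (subxx _) (sT _) (sT _) (sT _) dij dir djr cT).
  by rewrite -Tfun_SS !card_Sof mulrC mulKf.
Qed.
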